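(* Let $(G,w)$, $(G',w')$ be loopless vertex-weighted graphs of genus $g$ and $g'$ respectively, and let $\phi:(G,w)\to(G',w')$ be a pseudo-harmonic indexed morphism. Then, writing $v'=\phi(v)$, $$2g-2=\deg(\phi)(2g'-2)+\sum_{v\in V(G)}2\big(M_\phi(v)-1+w(v)-M_\phi(v)w'(v')\big)-\sum_{v\in V(G)}\sum_{e\in E_v(G)}(r_\phi(e)-1)$$ $$=\deg(\phi)(2g'-2)+\sum_{v\in V(G)}2\big(M_\phi(v)-1+w(v)-M_\phi(v)w'(v')\big)+\sum_{v\in V(G)}\big(val(v)-M_\phi(v)val(v')\big).$$
   Context: A vertex-weighted graph $(G,w)$ is a finite connected loopless multigraph $G$ with $w:V(G)\to\mathbb{Z}_{\ge0}$; its genus is $g(G,w)=|E(G)|-|V(G)|+1+\sum_{v}w(v)$. $E_v(G)$ is the set of edges incident to $v$ and $val(v)=|E_v(G)|$. A morphism $\phi:G\to G'$ is a map $V(G)\cup E(G)\to V(G')\cup E(G')$ with $\phi(V(G))\subseteq V(G')$ such that each edge $e$ with endpoints $v_1,v_2$ is mapped either to an edge with endpoints $\phi(v_1),\phi(v_2)$ or to the vertex $\phi(v_1)=\phi(v_2)$. An indexed morphism assigns to every $e\in E(G)$ an integer $r_\phi(e)\ge0$, with $r_\phi(e)=0$ iff $\phi(e)$ is a vertex. It is pseudo-harmonic if for every $v\in V(G)$ there is $M_\phi(v)$ such that $M_\phi(v)=\sum_{e\in E(G),\,v\in e,\,\phi(e)=e'}r_\phi(e)$ for every $e'\in E(G')$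 incident to $\phi(v)$. Its degree is $\deg(\phi)=\sum_{e\in E(G),\phi(e)=e'}r_\phi(e)$ for any $e'\in E(G')$. *)

(* Defs.v *)
From HB Require Import structures.
From mathcomp Require Import all_boot all_order all_algebra.
Set Implicit Arguments. Unset Strict Implicit. Unset Printing Implicit Defensive.
Import Order.TTheory GRing.Theory Num.Theory.

(* A vertex-weighted multigraph: finite vertex and edge types, each edge has an
   (unordered, recorded as a pair) set of two endpoints, and a weight on vertices. *)
Record wgraph := WGraph {
  vert : finType;
  edge : finType;
  ends : edge -> vert * vert;
  weight : vert -> nat }.

Definition incident (G : wgraph) (v : vert G) (e : edge G) : bool :=
  ((ends e).1 == v) || ((ends e).2 == v).

Definition Ev (G : wgraph) (v : vert G) : {set edge G} := [set e | incident v e].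

Definition valence (G : wgraph) (v : vert G) : nat := #|Ev v|.

Definition adj (G : wgraph) : rel (vert G) :=
  fun u v => [exists e, (ends e == (u, v)) || (ends e == (v, u))].

Definition loopless (G : wgraph) : Prop := forall e : edge G, (ends e).1 != (ends e).2.

Definition connected_graph (G : wgraph) : Prop :=
  0 < #|vert G| /\ forall u v : vert G, connect (@adj G) u v.

Definition genus (G : wgraph) : int :=
  (#|edge G|%:Z - #|vert G|%:Z + 1 + \sum_(v : vert G) (weight v)%:Z)%R.

Definition is_morphism (G G' : wgraph) (phiV : vert G -> vert G')
    (phiE : edge G -> vert G' + edge G') : Prop :=
  forall e : edge G,
    match phiE e with
    | inl u => phiV (ends e).1 = u /\ phiV (ends e).2 = u
    | inr e' => ends e' = (phiV (ends e).1, phiV (ends e).2) \/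
                ends e' = (phiV (ends e).2, phiV (ends e).1)
    end.

Definition is_indexing (G G' : wgraph) (phiE : edge G -> vert G' + edge G')
    (r : edge G -> nat) : Prop :=
  forall e : edge G, (r e == 0%N) = (if phiE e is inl _ then true else false).

(* M is a witness of pseudo-harmonicity: M(v) = sum_{e in E_v, phi(e) = e'} r(e)
   for every edge e' incident to phi(v). *)
Definition pseudo_harmonic_with (G G' : wgraph) (phiV : vert G -> vert G')
    (phiE : edge G -> vert G' + edge G') (r : edge G -> nat) (M : vert G -> nat) : Prop :=
  forall (v : vert G) (e' : edge G'), incident (phiV v) e' ->
    M v = (\sum_(e in Ev v | phiE e == inr e') r e)%N.

Definition is_degree (G G' : wgraph) (phiE : edge G -> vert G' + edge G')
    (r : edge G -> nat) (d : nat) : Prop :=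
  forall e' : edge G', d = (\sum_(e | phiE e == inr e') r e)%N.

(* Main.v *)
Require Import Defs.
From HB Require Import structures.
From mathcomp Require Import all_boot all_order all_algebra zify ring.
Import Order.TTheory GRing.Theory Num.Theory.
Set Implicit Arguments. Unset Strict Implicit.
Local Open Scope ring_scope.

Lemma sumZ (I : finType) (P : pred I) (F : I -> nat) :
  (\sum_(i | P i) (F i)%:Z)%R = (\sum_(i | P i) F i)%N%:Z.
Proof. by rewrite (big_morph Posz PoszD (erefl (Posz 0))). Qed.

Lemma card_inc (G : wgraph) (e : edge G) : loopless G ->
  #|[pred v | incident v e]| = 2.
Proof.
move=> lG.
transitivity #|[set (ends e).1; (ends e).2]|; last by rewrite cards2 (lG e).
apply: eq_card => v; rewrite !inE /incident.
by rewrite (eq_sym v) (eq_sym v).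
Qed.

Lemma handshake (G : wgraph) (f : edge G -> nat) : loopless G ->
  (\sum_v \sum_(e in Ev v) f e = 2 * \sum_e f e)%N.
Proof.
move=> lG.
rewrite (exchange_big_dep xpredT) //= big_distrr /=.
apply: eq_bigr => e _.
rewrite (eq_bigl [pred v | incident v e]); last by move=> v; rewrite /Ev inE.
by rewrite sum_nat_const card_inc // mulnC.
Qed.

Lemma valence_sum (G : wgraph) : loopless G ->
  (\sum_(v : vert G) valence v = 2 * #|edge G|)%N.
Proof.
move=> lG; rewrite /valence.
under eq_bigr do rewrite -sum1_card.
by rewrite handshake // sum1_card.
Qed.

Lemma sum_r (G G' : wgraph) (phiE : edge G -> vert G' + edge G')
    (r : edge G -> nat) (d : nat) :
  is_indexing phiE r -> is_degree phiE r d ->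
  (\sum_e r e = d * #|edge G'|)%N.
Proof.
move=> hi hd.
transitivity (\sum_e \sum_e' (if phiE e == inr e' then r e else 0))%N.
  apply: eq_bigr => e _.
  have := hi e; case: (phiE e) => [u|x] h.
    by rewrite big1 //; apply/eqP; rewrite h.
  by rewrite -big_mkcond /= (big_pred1 x).
rewrite exchange_big /=; transitivity (\sum_(e' : edge G') d)%N; last by rewrite sum_nat_const mulnC.
apply: eq_bigr => e' _; by rewrite (hd e') [RHS]big_mkcond.
Qed.

Lemma has_edge (G : wgraph) : connected_graph G -> (0 < #|edge G|)%N ->
  forall v : vert G, exists e, incident v e.
Proof.
move=> [_ hc] /card_gt0P [e0 _] v.
case/connectP: (hc v (ends e0).1) => [[|x p]] /= hp hl.
  by exists e0; rewrite /incident hl eqxx.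
case/andP: hp => /existsP [e he] _; exists e.
by rewrite /incident; case/orP: he => /eqP -> /=; rewrite eqxx ?orbT.
Qed.

Lemma fiber (G G' : wgraph) (phiV : vert G -> vert G')
    (phiE : edge G -> vert G' + edge G') (r : edge G -> nat)
    (M : vert G -> nat) (d : nat) (v' : vert G') (e' : edge G') :
  loopless G' -> is_morphism phiV phiE ->
  pseudo_harmonic_with phiV phiE r M -> is_degree phiE r d ->
  incident v' e' ->
  (\sum_(v | phiV v == v') M v = d)%N.
Proof.
move=> lG' hm hh hd hinc.
rewrite (hd e').
transitivity (\sum_(v | phiV v == v') \sum_(e in Ev v | phiE e == inr e') r e)%N.
  by apply: eq_bigr => v /eqP hv; apply: hh; rewrite hv.
rewrite (exchange_big_dep (fun e => phiE e == inr e')) /=; last by move=> v e _ /andP[].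
apply: eq_bigr => e he.
have hme := hm e; rewrite (eqP he) in hme.
set a := (ends e).1; set b := (ends e).2.
have [hab hv'] : phiV a != phiV b /\ ((phiV a == v') || (phiV b == v')).
  move: (lG' e') hinc; rewrite /incident.
  case: hme => -> /= l hinc; split => //; last by rewrite orbC.
  by rewrite eq_sym.
have [c hc] : exists c, forall v, ((phiV v == v') && ((e \in Ev v) && (phiE e == inr e'))) = (v == c).
  case/orP: hv' => /eqP hv'.
    exists a => v; rewrite he andbT /Ev inE /incident -/a -/b.
    case: (eqVneq v a) => [->|na]; first by rewrite hv' eqxx.
    case: (eqVneq b v) => [<-|]; last by rewrite andbF.
    by rewrite -hv' eq_sym (negbTE hab).
  exists b => v; rewrite he andbT /Ev inE /incident -/a -/b.
  case: (eqVneq v b) => [->|nb]; first by rewrite hv' eqxx orbT.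
  rewrite orbF; case: (eqVneq a v) => [<-|]; last by rewrite andbF.
  by rewrite -hv' (negbTE hab).
by rewrite (eq_bigl (pred1 c)) ?big_pred1_eq.
Qed.

Lemma fiber_sum (G G' : wgraph) (phiV : vert G -> vert G')
    (phiE : edge G -> vert G' + edge G') (r : edge G -> nat)
    (M : vert G -> nat) (d : nat) (g : vert G' -> nat) :
  connected_graph G' -> loopless G' -> (0 < #|edge G'|)%N -> is_morphism phiV phiE ->
  pseudo_harmonic_with phiV phiE r M -> is_degree phiE r d ->
  (\sum_v M v * g (phiV v) = d * \sum_v' g v')%N.
Proof.
move=> cG lG hE hm hh hd.
rewrite (partition_big phiV xpredT) //= big_distrr /=.
apply: eq_bigr => v' _.
have [e' he'] := @has_edge G' cG hE v'.
rewrite -(fiber lG hm hh hd he') big_distrl /=.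
by apply: eq_bigr => v /eqP ->.
Qed.

Unset Implicit Arguments.
Local Close Scope ring_scope.

Theorem theorem4p8 (G G' : wgraph) (phiV : vert G -> vert G')
    (phiE : edge G -> vert G' + edge G') (r : edge G -> nat)
    (M : vert G -> nat) (d : nat) :
  connected_graph G -> loopless G ->
  connected_graph G' -> loopless G' ->
  (0 < #|edge G'|)%N ->
  is_morphism phiV phiE -> is_indexing phiE r ->
  pseudo_harmonic_with phiV phiE r M -> is_degree phiE r d ->
  let S := (\sum_(v : vert G)
              2 * ((M v)%:Z - 1 + (weight v)%:Z - (M v)%:Z * (weight (phiV v))%:Z))%R in
  ((2 * genus G - 2 = d%:Z * (2 * genus G' - 2) + S
       - \sum_(v : vert G) \sum_(e in Ev v) ((r e)%:Z - 1))%R /\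
   (2 * genus G - 2 = d%:Z * (2 * genus G' - 2) + S
       + \sum_(v : vert G) ((valence v)%:Z - (M v)%:Z * (valence (phiV v))%:Z))%R).
Proof.
Local Open Scope ring_scope.
move=> cG lG cG' lG' hE hm hi hh hd S.
have e1 : \sum_(v : vert G) \sum_(e in Ev v) ((r e)%:Z - 1) =
   (\sum_v \sum_(e in Ev v) r e)%N%:Z - (\sum_(v : vert G) valence v)%N%:Z.
  rewrite -!sumZ -sumrB; apply: eq_bigr => v _.
  by rewrite sumrB sumr_const /valence natz sumZ.
have e2 : S = 2 * (\sum_v M v)%N%:Z - 2 * #|vert G|%:Z + 2 * (\sum_(v : vert G) weight v)%N%:Z
   - 2 * (\sum_v M v * weight (phiV v))%N%:Z.
  rewrite /S -mulr_sumr !sumrB big_split /= sumrB sumr_const -!sumZ.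
  under [X in _ - X]eq_bigr do rewrite -PoszM.
  rewrite natz; ring.
have e3 : \sum_v ((valence v)%:Z - (M v)%:Z * (valence (phiV v))%:Z) =
   (\sum_(v : vert G) valence v)%N%:Z - (\sum_v M v * valence (phiV v))%N%:Z.
  by rewrite sumrB -!sumZ; under [X in _ - X]eq_bigr do rewrite -PoszM.
rewrite e1 e2 e3 /genus !sumZ.
rewrite (fiber_sum (@valence G') cG' lG' hE hm hh hd).
rewrite (fiber_sum (@weight G') cG' lG' hE hm hh hd).
have := fiber_sum (fun _ => 1%N) cG' lG' hE hm hh hd.
under eq_bigr do rewrite muln1.
rewrite sum_nat_const muln1 => ->.
have -> : #|[pred _ : vert G' | true]| = #|vert G'| by apply: eq_card.
rewrite handshake // (sum_r hi hd) !valence_sum //.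
split; nia.
Qed.
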